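(* Let $f:[0,1]\to\mathbb{R}$ with $f(0),f(1)\in\mathbb{Z}$, let $n\in\mathbb{N}_+$, $n\ge 2$, and let $\Phi_n:[0,1]\to\mathbb{R}$ satisfy \[ \Phi_n\left(\tfrac{k+2}{n}\right)-2\Phi_n\left(\tfrac{k+1}{n}\right)+\Phi_n\left(\tfrac{k}{n}\right)\ge 2\binom{n}{k+1}^{-1},\quad k=0,\dots,n-2. \] If $f(x)+\Phi_n(x)$ is concave on $[0,1]$, then $\widetilde{B}_n(f)$ is concave on $[0,1]$.
   Context: For $n\in\mathbb{N}_+$ and $f:[0,1]\to\mathbb{R}$, $\widetilde{B}_n(f)(x):=\sum_{k=0}^n \left[f\left(\frac{k}{n}\right)\binom{n}{k}\right]x^k(1-x)^{n-k}$, where $[\alpha]$ is the largest integer $\le\alpha$. *)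

(* Defs.v *)
From Stdlib Require Import Reals Lra Lia.
Open Scope R_scope.

(* floor: Int_part x = up x - 1 is the largest integer <= x *)
Definition floorR (a : R) : R := IZR (Int_part a).

Definition Btilde (n : nat) (f : R -> R) (x : R) : R :=
  sum_f_R0 (fun k => floorR (f (INR k / INR n) * Binomial.C n k)
                     * x ^ k * (1 - x) ^ (n - k)) n.

Definition concave_on01 (g : R -> R) : Prop :=
  forall x y t, 0 <= x <= 1 -> 0 <= y <= 1 -> 0 <= t <= 1 ->
    t * g x + (1 - t) * g y <= g (t * x + (1 - t) * y).

(* Main.v *)
Require Import Defs.
From Stdlib Require Import Reals Lra Lia Psatz FunctionalExtensionality.
Open Scope R_scope.

Fixpoint bn (n k : nat) : R :=
  match n, k with
  | O, O => 1
  | O, S _ => 0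
  | S _, O => 1
  | S m, S j => bn m j + bn m (S j)
  end.

Lemma bn_gt (n k : nat) : (n < k)%nat -> bn n k = 0.
Proof.
  revert k; induction n as [|n IH]; intros k H; destruct k; simpl; try lia; auto.
  rewrite !IH; try lia; ring.
Qed.

Lemma bn_pos (n k : nat) : (k <= n)%nat -> 1 <= bn n k.
Proof.
  revert k; induction n as [|n IH]; intros k H; destruct k; simpl; try lra; try lia.
  destruct (Nat.eq_dec k n) as [->|Hk].
  - rewrite (bn_gt n (S n)) by lia. specialize (IH n (le_n n)). lra.
  - assert (1 <= bn n k) by (apply IH; lia). assert (1 <= bn n (S k)) by (apply IH; lia). lra.
Qed.

Lemma bn_nonneg (n k : nat) : 0 <= bn n k.
Proof.
  destruct (Compare_dec.le_lt_dec k n). pose proof (bn_pos n k l); lra. rewrite bn_gt; [lra|exact l].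
Qed.

Lemma C_0 n : C n 0 = 1.
Proof. unfold C. rewrite Nat.sub_0_r. simpl. field. apply INR_fact_neq_0. Qed.
Lemma C_nn n : C n n = 1.
Proof. unfold C. rewrite Nat.sub_diag. simpl. field. apply INR_fact_neq_0. Qed.

Lemma bn_C (n k : nat) : (k <= n)%nat -> bn n k = C n k.
Proof.
  revert k; induction n as [|n IH]; intros k H; destruct k; simpl; try lia.
  - rewrite C_0; auto.
  - rewrite C_0; auto.
  - destruct (Nat.eq_dec k n) as [->|Hk].
    + rewrite (bn_gt n (S n)) by lia. rewrite IH by lia. rewrite !C_nn. ring.
    + rewrite !IH by lia. apply pascal. lia.
Qed.

Definition B (n : nat) (c : nat -> R) (x : R) : R :=
  sum_f_R0 (fun k => c k * bn n k * x ^ k * (1 - x) ^ (n - k)) n.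

Definition Sh (c : nat -> R) : nat -> R := fun k => c (S k).
Definition Df (c : nat -> R) : nat -> R := fun k => c (S k) - c k.

Lemma B_rec n c x : B (S n) c x = (1 - x) * B n c x + x * B n (Sh c) x.
Proof.
  unfold B. rewrite decomp_sum by lia. simpl Nat.pred.
  rewrite (sum_eq _ (fun j => c (S j) * bn n j * x ^ S j * (1 - x) ^ (n - j)
                             + c (S j) * bn n (S j) * x ^ S j * (1 - x) ^ (n - j))).
  2:{ intros i Hi. simpl bn. replace (S n - S i)%nat with (n - i)%nat by lia. ring. }
  rewrite plus_sum.
  assert (E1 : sum_f_R0 (fun j => c (S j) * bn n j * x ^ S j * (1 - x) ^ (n - j)) n
             = x * sum_f_R0 (fun k => Sh c k * bn n k * x ^ k * (1 - x) ^ (n - k)) n).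
  { rewrite scal_sum. apply sum_eq. intros i Hi. unfold Sh. simpl. ring. }
  assert (E2 : c 0%nat * bn (S n) 0 * x ^ 0 * (1 - x) ^ (S n - 0)
        + sum_f_R0 (fun j => c (S j) * bn n (S j) * x ^ S j * (1 - x) ^ (n - j)) n
        = (1 - x) * sum_f_R0 (fun k => c k * bn n k * x ^ k * (1 - x) ^ (n - k)) n).
  { transitivity (sum_f_R0 (fun k => c k * bn n k * x ^ k * (1 - x) ^ (S n - k)) (S n)).
    - rewrite (decomp_sum _ (S n)) by lia. simpl Nat.pred. simpl bn.
      destruct n; simpl; reflexivity.
    - rewrite tech5. rewrite bn_gt by lia. rewrite scal_sum.
      replace (c (S n) * 0 * x ^ S n * (1 - x) ^ (S n - S n)) with 0 by ring.
      rewrite Rplus_0_r. apply sum_eq. intros i Hi.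
      replace (S n - i)%nat with (S (n - i)) by lia. simpl. ring. }
  lra.
Qed.

Lemma dlim_eq f x l l' : derivable_pt_lim f x l -> l = l' -> derivable_pt_lim f x l'.
Proof. intros H ->; exact H. Qed.

Lemma B_sub n a b x : B n (fun k => a k - b k) x = B n a x - B n b x.
Proof.
  unfold B. rewrite <- minus_sum. apply sum_eq. intros; ring.
Qed.

Lemma d_1mx x : derivable_pt_lim (fun y => 1 - y) x (-1).
Proof.
  apply (dlim_eq (fct_cte 1 - id)%F x (0 - 1)).
  apply derivable_pt_lim_minus. apply derivable_pt_lim_const. apply derivable_pt_lim_id.
  ring.
Qed.

Lemma B_deriv n : forall c x, derivable_pt_lim (B n c) x (INR n * B (pred n) (Df c) x).
Proof.
  induction n as [|n IH]; intros c x.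
  - assert (E : B 0 c = fct_cte (c 0%nat)).
    { apply functional_extensionality; intro y. unfold B, fct_cte. simpl. ring. }
    rewrite E. apply (dlim_eq _ x 0). apply derivable_pt_lim_const. simpl; ring.
  - assert (E : B (S n) c = fun y => (1 - y) * B n c y + y * B n (Sh c) y).
    { apply functional_extensionality; intro y. apply B_rec. }
    rewrite E.
    apply (dlim_eq _ x ((-1 * B n c x + (1 - x) * (INR n * B (pred n) (Df c) x))
                       + (1 * B n (Sh c) x + x * (INR n * B (pred n) (Df (Sh c)) x)))).
    + apply (derivable_pt_lim_plus (fun y => (1 - y) * B n c y) (fun y => y * B n (Sh c) y)).
      * apply (derivable_pt_lim_mult (fun y => 1 - y) (B n c)). apply d_1mx. apply IH.
      * apply (derivable_pt_lim_mult id (B n (Sh c))). apply derivable_pt_lim_id. apply IH.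
    + assert (HD : B n (Sh c) x - B n c x = B n (Df c) x).
      { rewrite <- B_sub. reflexivity. }
      destruct n as [|m].
      * simpl INR. simpl pred. rewrite <- HD. simpl. ring.
      * simpl pred. pose proof (B_rec m (Df c) x) as HR.
        change (Df (Sh c)) with (Sh (Df c)).
        replace (B (S m) (Sh c) x) with (B (S m) c x + ((1-x)*B m (Df c) x + x*B m (Sh (Df c)) x)) by lra.
        rewrite HR. rewrite (S_INR (S m)). ring.
Qed.

Lemma mul_np a b : a <= 0 -> 0 <= b -> a * b <= 0.
Proof. intros. nra. Qed.

Lemma mvt_le g g' a b : a <= b -> (forall x, derivable_pt_lim g x (g' x)) ->
  exists c, a <= c <= b /\ g b - g a = g' c * (b - a).
Proof.
  intros Hab Hd. destruct (Rle_lt_or_eq_dec a b Hab) as [H|H].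
  - destruct (MVT_cor2 g g' a b H (fun c _ => Hd c)) as [c [E Hc]].
    exists c; split; [lra|exact E].
  - subst. exists b; split; [lra|ring].
Qed.

Lemma concave_deriv2 g g1 g2 :
  (forall x, derivable_pt_lim g x (g1 x)) ->
  (forall x, derivable_pt_lim g1 x (g2 x)) ->
  (forall x, 0 <= x <= 1 -> g2 x <= 0) -> concave_on01 g.
Proof.
  intros D1 D2 N.
  assert (M : forall u v, 0 <= u -> u <= v -> v <= 1 -> g1 v <= g1 u).
  { intros u v Hu Huv Hv. destruct (mvt_le g1 g2 u v Huv D2) as [c [Hc E]].
    assert (g2 c <= 0) by (apply N; lra).
    assert (g2 c * (v - u) <= 0).
    { apply mul_np; lra. }
    lra. }
  assert (K : forall x y t, 0 <= x -> x <= y -> y <= 1 -> 0 <= t <= 1 ->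
      t * g x + (1 - t) * g y <= g (t * x + (1 - t) * y)).
  { intros x y t Hx Hxy Hy Ht. set (z := t * x + (1 - t) * y).
    assert (Hz1 : z - x = (1 - t) * (y - x)) by (unfold z; ring).
    assert (Hz2 : y - z = t * (y - x)) by (unfold z; ring).
    assert (0 <= (1 - t) * (y - x)) by (apply Rmult_le_pos; lra).
    assert (0 <= t * (y - x)) by (apply Rmult_le_pos; lra).
    destruct (mvt_le g g1 x z ltac:(lra) D1) as [c1 [Hc1 E1]].
    destruct (mvt_le g g1 z y ltac:(lra) D1) as [c2 [Hc2 E2]].
    assert (H12 : g1 c2 <= g1 c1) by (apply M; lra).
    assert (P : 0 <= t * (1 - t) * (y - x) * (g1 c1 - g1 c2)).
    { apply Rmult_le_pos; [|lra]. apply Rmult_le_pos; [|lra]. apply Rmult_le_pos; lra. }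
    rewrite Hz1 in E1. rewrite Hz2 in E2.
    assert (E : t * g x + (1 - t) * g y - g z = - (t * (1 - t) * (y - x) * (g1 c1 - g1 c2))).
    { replace (g x) with (g z - g1 c1 * ((1 - t) * (y - x))) by lra.
      replace (g y) with (g z + g1 c2 * (t * (y - x))) by lra. ring. }
    lra. }
  intros x y t Hx Hy Ht.
  destruct (Rle_or_lt x y).
  - apply K; lra.
  - pose proof (K y x (1 - t) ltac:(lra) ltac:(lra) ltac:(lra) ltac:(lra)) as H'.
    replace (1 - t) with (1 - t) in H' by ring.
    replace ((1 - t) * y + (1 - (1 - t)) * x) with (t * x + (1 - t) * y) in H' by ring.
    replace (1 - (1 - t)) with t in H' by ring. lra.
Qed.

Lemma sum_nonpos F N : (forall k, (k <= N)%nat -> F k <= 0) -> sum_f_R0 F N <= 0.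
Proof.
  induction N as [|N IH]; intros H; simpl.
  - apply H; lia.
  - assert (sum_f_R0 F N <= 0) by (apply IH; intros; apply H; lia).
    assert (F (S N) <= 0) by (apply H; lia). lra.
Qed.

Lemma B_nonpos m d x : 0 <= x <= 1 -> (forall k, (k <= m)%nat -> d k <= 0) -> B m d x <= 0.
Proof.
  intros Hx Hd. unfold B. apply sum_nonpos. intros k Hk.
  assert (0 <= bn m k * x ^ k * (1 - x) ^ (m - k)).
  { apply Rmult_le_pos. apply Rmult_le_pos. apply bn_nonneg. apply pow_le; lra. apply pow_le; lra. }
  assert (d k <= 0) by (apply Hd; lia).
  replace (d k * bn m k * x ^ k * (1 - x) ^ (m - k)) with (d k * (bn m k * x ^ k * (1 - x) ^ (m - k))) by ring.
  apply mul_np; lra.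
Qed.

Theorem proposition3p2 (f Phi : R -> R) (n : nat) :
  (exists z : Z, f 0 = IZR z) ->
  (exists z : Z, f 1 = IZR z) ->
  (2 <= n)%nat ->
  (forall k : nat, (k <= n - 2)%nat ->
     Phi (INR (k + 2) / INR n) - 2 * Phi (INR (k + 1) / INR n) + Phi (INR k / INR n)
       >= 2 / Binomial.C n (k + 1)) ->
  concave_on01 (fun x => f x + Phi x) ->
  concave_on01 (Btilde n f).
Proof.
  intros _ _ Hn HPhi Hconc.
  set (c := fun k => floorR (f (INR k / INR n) * C n k) / bn n k).
  assert (EB : Btilde n f = B n c).
  { apply functional_extensionality; intro x. unfold Btilde, B. apply sum_eq.
    intros i Hi. unfold c. pose proof (bn_pos n i Hi). field. lra. }
  assert (Cb : forall j, (j <= n)%nat ->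
     c j <= f (INR j / INR n) /\ f (INR j / INR n) - 1 / bn n j < c j).
  { intros j Hj. pose proof (bn_pos n j Hj) as Hp. pose proof (bn_C n j Hj) as HC.
    unfold c, floorR. rewrite <- HC.
    destruct (base_Int_part (f (INR j / INR n) * bn n j)) as [L1 L2].
    set (F := IZR (Int_part (f (INR j / INR n) * bn n j))) in *.
    set (y := f (INR j / INR n)) in *.
    assert (Hi : 0 < / bn n j) by (apply Rinv_0_lt_compat; lra).
    assert (E1 : y * bn n j * / bn n j = y) by (field; lra).
    assert (E2 : (y * bn n j - 1) * / bn n j = y - 1 / bn n j) by (field; lra).
    split.
    - unfold Rdiv. rewrite <- E1. apply Rmult_le_compat_r; lra.
    - rewrite <- E2. unfold Rdiv. apply Rmult_lt_compat_r; lra. }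
  assert (Hnr : 0 < INR n) by (apply lt_0_INR; lia).
  assert (D2 : forall k, (k <= n - 2)%nat -> Df (Df c) k <= 0).
  { intros k Hk. unfold Df.
    destruct (Cb k ltac:(lia)) as [A0 B0].
    destruct (Cb (S k) ltac:(lia)) as [A1 B1].
    destruct (Cb (S (S k)) ltac:(lia)) as [A2 B2].
    pose proof (HPhi k Hk) as HP.
    replace (k + 2)%nat with (S (S k)) in HP by lia.
    replace (k + 1)%nat with (S k) in HP by lia.
    rewrite <- (bn_C n (S k)) in HP by lia.
    assert (Hx0 : 0 <= INR k / INR n <= 1).
    { split. unfold Rdiv; apply Rmult_le_pos; [apply pos_INR|left; apply Rinv_0_lt_compat; lra].
      apply (Rmult_le_reg_r (INR n)); [lra|]. unfold Rdiv. rewrite Rmult_assoc, Rinv_l by lra.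
      rewrite Rmult_1_r, Rmult_1_l. apply le_INR; lia. }
    assert (Hx2 : 0 <= INR (S (S k)) / INR n <= 1).
    { split. unfold Rdiv; apply Rmult_le_pos; [apply pos_INR|left; apply Rinv_0_lt_compat; lra].
      apply (Rmult_le_reg_r (INR n)); [lra|]. unfold Rdiv. rewrite Rmult_assoc, Rinv_l by lra.
      rewrite Rmult_1_r, Rmult_1_l. apply le_INR; lia. }
    pose proof (Hconc _ _ (/2) Hx0 Hx2 ltac:(lra)) as HC. cbv beta in HC.
    replace (/ 2 * (INR k / INR n) + (1 - / 2) * (INR (S (S k)) / INR n))
      with (INR (S k) / INR n) in HC.
    2:{ rewrite !S_INR. field; lra. }
    assert (1 / bn n (S k) = / bn n (S k)) by (unfold Rdiv; ring).
    unfold Rdiv in HP. lra. }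
  rewrite EB.
  apply (concave_deriv2 (B n c) (fun x => INR n * B (pred n) (Df c) x)
           (fun x => INR n * (INR (pred n) * B (pred (pred n)) (Df (Df c)) x))).
  - intro x. apply B_deriv.
  - intro x. apply (derivable_pt_lim_scal (B (pred n) (Df c)) (INR n) x). apply B_deriv.
  - intros x Hx.
    assert (B (pred (pred n)) (Df (Df c)) x <= 0).
    { apply B_nonpos; auto. intros k Hk. apply D2. lia. }
    assert (0 <= INR n * INR (pred n)) by (apply Rmult_le_pos; apply pos_INR).
    replace (INR n * (INR (pred n) * B (pred (pred n)) (Df (Df c)) x))
      with (B (pred (pred n)) (Df (Df c)) x * (INR n * INR (pred n))) by ring.
    apply mul_np; lra.
Qed.
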